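(* Let $X$ have the $\Gamma(\alpha,1)$ distribution (density $x^{\alpha-1}e^{-x}/(\alpha-1)!$, $x\geq0$) with integer shape parameter $\alpha\geq 2$. For every integer $s\geq 2$, the tail of the $s$-iterated distribution induced by $X$ is $$\overline{T}_{X,s}(x)=e^{-x}+\frac{e^{-x}}{\binom{\alpha+s-2}{\alpha-1}}\sum_{\ell=1}^{\alpha-1}\binom{s+\alpha-\ell-2}{\alpha-\ell-1}\frac{x^\ell}{\ell!},\qquad x\geq 0.$$
   Context: For a nonnegative absolutely continuous random variable $X$ with density $f_X$, set $\overline{T}_{X,0}=f_X$, $\mu_{X,0}=1$, and for integers $s\geq 1$ define recursively $\overline{T}_{X,s}(x)=\frac{1}{\mu_{X,s-1}}\int_x^\infty\overline{T}_{X,s-1}(t)\,dt$ and $\mu_{X,s}=\int_0^\infty\overline{T}_{X,s}(t)\,dt$. $\overline{T}_{X,s}$ is the tail (survival function) of the $s$-iterated distribution induced by $X$. *)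

(* Defs.v *)
From Stdlib Require Import Reals Factorial.
From Coquelicot Require Import Coquelicot.
Open Scope R_scope.

Definition int_from (g : R -> R) (a : R) : R :=
  RInt_gen g (at_point a) (Rbar_locally p_infty).

Fixpoint iter_tail_mu (f : R -> R) (s : nat) : (R -> R) * R :=
  match s with
  | O => (f, 1)
  | S s' =>
      let '(T, mu) := iter_tail_mu f s' in
      let T' := fun x => / mu * int_from T x in
      (T', int_from T' 0)
  end.

Definition iter_tail (f : R -> R) (s : nat) : R -> R := fst (iter_tail_mu f s).
Definition iter_mu (f : R -> R) (s : nat) : R := snd (iter_tail_mu f s).

Definition gamma_density (alpha : nat) (x : R) : R :=
  if Rle_dec 0 x then x ^ (alpha - 1) * exp (- x) / INR (fact (alpha - 1)) else 0.

(* Main.v *)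
Require Import Defs.
From Stdlib Require Import Reals Factorial.
From Coquelicot Require Import Coquelicot.
Open Scope R_scope.
From Stdlib Require Import Lia Lra.

Lemma fact_pos' k : 0 < INR (fact k).
Proof. apply lt_0_INR, lt_O_fact. Qed.

Lemma exp_ge_pow t k : 0 <= t -> t ^ (S k) / INR (fact (S k)) <= exp t.
Proof.
  intros Ht. eapply Rle_trans; [|apply (exp_ge_taylor t (S k) Ht)].
  rewrite tech5.
  assert (0 <= sum_f_R0 (fun k0 : nat => t ^ k0 / INR (fact k0)) k).
  { apply cond_pos_sum. intros n. apply Rmult_le_pos. apply pow_le; auto.
    left; apply Rinv_0_lt_compat, fact_pos'. }
  lra.
Qed.

Lemma lim_exp_pow k : is_lim (fun t => exp (- t) * t ^ k) p_infty 0.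
Proof.
  apply is_lim_le_le_loc with (f := fun _ => 0) (g := fun t => INR (fact (S k)) * / t).
  - exists 0. intros t Ht. split.
    + apply Rmult_le_pos; [left; apply exp_pos| apply pow_le; lra].
    + pose proof (exp_ge_pow t k (Rlt_le _ _ Ht)) as H.
      pose proof (fact_pos' (S k)).
      rewrite exp_Ropp. 
      assert (Hp : 0 < t ^ k) by (apply pow_lt; lra).
      apply Rmult_le_reg_l with (r := exp t * t); [apply Rmult_lt_0_compat; [apply exp_pos|lra]|].
      replace (exp t * t * (/ exp t * t ^ k)) with (t ^ S k) by (simpl; field; apply Rgt_not_eq, exp_pos).
      replace (exp t * t * (INR (fact (S k)) * / t)) with (exp t * INR (fact (S k))) by (field; lra).
      apply Rmult_le_reg_r with (r := / INR (fact (S k))). apply Rinv_0_lt_compat; lra.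
      rewrite Rmult_assoc, Rinv_r by lra. rewrite Rmult_1_r. exact H.
  - apply is_lim_const.
  - replace (Finite 0) with (Rbar_mult (INR (fact (S k))) (Rbar_inv p_infty)).
    apply is_lim_scal_l. apply is_lim_inv. apply is_lim_id. discriminate.
    simpl. f_equal. ring.
Qed.
Lemma sum_n_Sm_R (a : nat -> R) n m : (n <= S m)%nat -> sum_n_m a n (S m) = sum_n_m a n m + a (S m).
Proof. intros H. rewrite sum_n_Sm by exact H. reflexivity. Qed.
Lemma sum_Sn_m_R (a : nat -> R) n m : (n <= m)%nat -> sum_n_m a n m = a n + sum_n_m a (S n) m.
Proof. intros H. rewrite sum_Sn_m by exact H. reflexivity. Qed.
Lemma sum_n_m_plus_R (a b : nat -> R) n m : sum_n_m (fun k => a k + b k) n m = sum_n_m a n m + sum_n_m b n m.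
Proof. apply (sum_n_m_plus a b). Qed.
Lemma sum_n_m_mult_l_R (c : R) (a : nat -> R) n m : sum_n_m (fun k => c * a k) n m = c * sum_n_m a n m.
Proof. apply (sum_n_m_mult_l c a). Qed.

Definition P (b : nat -> R) (n : nat) (x : R) := sum_n_m (fun k => b k * x ^ k / INR (fact k)) 0 n.
Definition pe (b : nat -> R) (n : nat) (x : R) := exp (- x) * P b n x.

Lemma deriv_mono k x : is_derive (fun y => y ^ (S k) / INR (fact (S k))) x (x ^ k / INR (fact k)).
Proof.
  auto_derive; auto. idtac.
  assert (E: INR (S k) = match k with 0%nat => 1 | S _ => INR k + 1 end) by reflexivity. rewrite <- E. replace (fact k + k * fact k)%nat with (S k * fact k)%nat by lia. rewrite mult_INR.
  assert (0 < INR (fact k)) by (apply lt_0_INR, lt_O_fact).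
  assert (0 < INR (S k)) by (apply lt_0_INR; lia).
  field. lra.
Qed.

Lemma P_deriv b m x : is_derive (P b (S m)) x (P (fun k => b (S k)) m x).
Proof.
  induction m as [|m IH] in x |- *.
  - unfold P. 
    apply is_derive_ext with (f := fun y => b 0%nat + b 1%nat * y).
    { intros t. rewrite sum_n_Sm_R by lia. rewrite sum_n_n. simpl. field. }
    rewrite sum_n_n. simpl. replace (b 1%nat * 1 / 1) with (b 1%nat) by field.
    auto_derive; auto. ring.
  - apply is_derive_ext with (f := fun y => P b (S m) y + b (S (S m)) * (y ^ (S (S m)) / INR (fact (S (S m))))).
    { intros t. unfold P. rewrite (sum_n_Sm_R _ 0 (S m)) by lia. unfold Rdiv. rewrite Rmult_assoc. reflexivity. }
    unfold P at 2. rewrite sum_n_Sm_R by lia. fold (P (fun k => b (S k)) m x).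
    replace (b (S (S m)) * x ^ S m / INR (fact (S m))) with (b (S (S m)) * (x ^ S m / INR (fact (S m)))) by (unfold Rdiv; ring).
    apply (is_derive_plus (P b (S m))). apply IH.
    apply (is_derive_scal (fun y => y ^ (S (S m)) / INR (fact (S (S m))))). apply deriv_mono.
Qed.

Ltac Rify := match goal with |- ?a = ?b => change (@eq R a b) end.

Definition tl (a : nat -> R) (n k : nat) := sum_n_m a k n.

Lemma P_tail a m x : P (tl a (S m)) (S m) x - P (fun k => tl a (S m) (S k)) m x = P a (S m) x.
Proof.
  assert (E1: P (fun k => tl a (S m) (S k)) m x = sum_n_m (fun k => tl a (S m) (S k) * x^k / INR (fact k)) 0 (S m)).
  { unfold P. rewrite (sum_n_Sm_R (fun k => tl a (S m) (S k) * x^k / INR (fact k))) by lia.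
    replace (tl a (S m) (S (S m))) with 0 by (unfold tl; rewrite sum_n_m_zero by lia; reflexivity).
    rewrite Rmult_0_l, Rdiv_0_l, Rplus_0_r. reflexivity. }
  rewrite E1. unfold P.
  assert (Hm : forall u v : R, u - v = u + (-1) * v) by (intros; ring). rewrite Hm.
  rewrite <- sum_n_m_mult_l_R, <- sum_n_m_plus_R.
  apply sum_n_m_ext_loc. intros k Hk.
  unfold tl. rewrite (sum_Sn_m_R a k (S m)) by lia. Rify. unfold Rdiv. ring.
Qed.

Lemma pe_deriv a m x : is_derive (fun t => - pe (tl a (S m)) (S m) t) x (pe a (S m) x).
Proof.
  set (b := tl a (S m)).
  assert (H1: is_derive (fun t => - exp(-t)) x (exp(-x))) by (auto_derive; auto; ring).
  pose proof (is_derive_mult _ _ x _ _ H1 (P_deriv b m x) ltac:(intros; apply Rmult_comm)) as H.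
  apply is_derive_ext with (f := fun t => mult (-exp(-t)) (P b (S m) t)).
  { intros t. unfold pe, mult; simpl. ring. }
  replace (pe a (S m) x) with (plus (mult (exp(-x)) (P b (S m) x)) (mult (- exp(-x)) (P (fun k => b (S k)) m x))).
  exact H.
  unfold pe. rewrite <- (P_tail a m x). unfold plus, mult; simpl. fold b. ring.
Qed.

Lemma pe_ex_derive c m x : ex_derive (pe c (S m)) x.
Proof.
  assert (H1: is_derive (fun t => exp(-t)) x (- exp(-x))) by (auto_derive; auto; ring).
  pose proof (is_derive_mult _ _ x _ _ H1 (P_deriv c m x) ltac:(intros; apply Rmult_comm)) as H.
  eexists. exact H.
Qed.

Lemma pe_cont c m x : continuous (pe c (S m)) x.
Proof. apply (ex_derive_continuous (K:=R_AbsRing) (V:=R_NormedModule)), pe_ex_derive. Qed.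

Lemma lim_scal0 f c : is_lim f p_infty 0 -> is_lim (fun t => c * f t) p_infty 0.
Proof.
  intros H. replace (Finite 0) with (Rbar_mult c 0). apply is_lim_scal_l, H.
  simpl. f_equal. ring.
Qed.

Lemma pe_lim b n : is_lim (pe b n) p_infty 0.
Proof.
  induction n as [|n IH].
  - apply is_lim_ext with (f := fun t => (b 0%nat / INR (fact 0)) * (exp (- t) * t ^ 0)).
    { intros t. unfold pe, P. rewrite sum_n_n. Rify. unfold Rdiv. ring. }
    apply lim_scal0, lim_exp_pow.
  - apply is_lim_ext with (f := fun t => pe b n t + (b (S n) / INR (fact (S n))) * (exp (- t) * t ^ (S n))).
    { intros t. unfold pe, P. rewrite sum_n_Sm_R by lia. Rify. unfold Rdiv. ring. }
    replace (Finite 0) with (Finite (0 + 0)) by (f_equal; ring).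
    apply is_lim_plus'. exact IH. apply lim_scal0, lim_exp_pow.
Qed.


Lemma int_pe a m g y : (forall t, y <= t -> g t = pe a (S m) t) ->
  int_from g y = pe (tl a (S m)) (S m) y.
Proof.
  intros Hg.
  set (F := fun t => - pe (tl a (S m)) (S m) t).
  assert (HD : forall t, Derive F t = pe a (S m) t).
  { intros t. apply is_derive_unique, pe_deriv. }
  assert (Hi : is_RInt_gen (Derive F) (at_point y) (Rbar_locally p_infty) (0 - F y)).
  { apply is_RInt_gen_Derive.
    - apply filter_forall. intros [u v] z _. 
      destruct (pe_ex_derive (tl a (S m)) m z) as [d Hd].
      exists (- d). apply (is_derive_opp (pe (tl a (S m)) (S m))). exact Hd.
    - apply filter_forall. intros [u v] z _.
      apply continuous_ext with (f := pe a (S m)).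
      { intros w. rewrite HD. reflexivity. }
      apply pe_cont.
    - intros P HP. unfold filtermap, at_point. apply (locally_singleton (F y)). exact HP.
    - pose proof (is_lim_opp _ _ _ (pe_lim (tl a (S m)) (S m))) as H.
      simpl in H. rewrite Ropp_0 in H. exact H. }
  apply is_RInt_gen_ext with (g := g) in Hi.
  - unfold int_from. rewrite (is_RInt_gen_unique _ _ Hi). unfold F. ring.
  - exists (fun u => u = y) (fun v => y < v).
    + reflexivity.
    + exists y. auto.
    + intros u v Hu Hv x Hx. simpl in *. subst u. rewrite HD, Hg; auto.
      rewrite Rmin_left in Hx by lra. lra.
Qed.

Lemma C_pos n k : 0 < Binomial.C n k.
Proof.
  unfold Binomial.C. apply Rmult_lt_0_compat. apply fact_pos'.
  apply Rinv_0_lt_compat, Rmult_lt_0_compat; apply fact_pos'.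
Qed.

Definition D (n j k : nat) : R := Binomial.C (j + n - k) (n - k).

Lemma hockey n j p : (p <= n)%nat -> sum_n_m (D n j) (n - p) n = D n (S j) (n - p).
Proof.
  induction p as [|p IH]; intros Hp.
  - rewrite Nat.sub_0_r, sum_n_n. unfold D. rewrite !Nat.sub_diag.
    rewrite !C_n_0. reflexivity.
  - rewrite sum_Sn_m_R by lia. replace (S (n - S p)) with (n - p)%nat by lia.
    rewrite IH by lia. unfold D.
    replace (j + n - (n - S p))%nat with (j + p + 1)%nat by lia.
    replace (n - (n - S p))%nat with (S p) by lia.
    replace (S j + n - (n - p))%nat with (j + p + 1)%nat by lia.
    replace (n - (n - p))%nat with p by lia.
    replace (S j + n - (n - S p))%nat with (S (j + p + 1)) by lia.
    rewrite <- pascal by lia. Rify. ring.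
Qed.

Lemma iter_tail_S f s : iter_tail f (S s) = fun x => / iter_mu f s * int_from (iter_tail f s) x.
Proof. unfold iter_tail, iter_mu. simpl. destruct (iter_tail_mu f s). reflexivity. Qed.

Lemma iter_mu_S f s : iter_mu f (S s) = int_from (iter_tail f (S s)) 0.
Proof. unfold iter_tail, iter_mu. simpl. destruct (iter_tail_mu f s). reflexivity. Qed.

Lemma pe_ext_loc b b' n x : (forall k, (k <= n)%nat -> b k = b' k) -> pe b n x = pe b' n x.
Proof.
  intros H. unfold pe, P. f_equal. apply sum_n_m_ext_loc. intros k Hk. rewrite H by lia. reflexivity.
Qed.

Lemma pe_scal c b n x : c * pe b n x = pe (fun k => c * b k) n x.
Proof.
  unfold pe, P. rewrite <- Rmult_assoc, (Rmult_comm c), Rmult_assoc. f_equal.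
  rewrite <- sum_n_m_mult_l_R. apply sum_n_m_ext. intros k. Rify. unfold Rdiv. ring.
Qed.

Lemma pe_at0 b n : pe b n 0 = b 0%nat.
Proof.
  unfold pe, P. rewrite Ropp_0, exp_0, Rmult_1_l.
  destruct n as [|n]. rewrite sum_n_n. simpl. Rify. field.
  rewrite sum_Sn_m_R by lia.
  rewrite (sum_n_m_ext_loc _ (fun _ => zero)).
  rewrite sum_n_m_const_zero. simpl. Rify. unfold zero; simpl. field.
  intros k Hk. destruct k as [|k]; [lia|]. rewrite pow_i by lia. Rify. unfold zero; simpl. unfold Rdiv. ring.
Qed.

Definition cc (n j : nat) (k : nat) : R := D n j k / D n j 0.

Lemma tl_cc n j k : (k <= n)%nat -> tl (cc n j) n k = D n (S j) k / D n j 0.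
Proof.
  intros Hk. unfold tl, cc.
  rewrite (sum_n_m_ext _ (fun i => / D n j 0 * D n j i)) by (intros; Rify; unfold Rdiv; ring).
  rewrite sum_n_m_mult_l_R.
  replace k with (n - (n - k))%nat at 1 by lia. rewrite hockey by lia.
  replace (n - (n - k))%nat with k by lia. Rify. unfold Rdiv. ring.
Qed.

Lemma main_ind m j x : 0 <= x ->
  iter_tail (gamma_density (S (S m))) (S j) x = pe (cc (S m) j) (S m) x.
Proof.
  set (f := gamma_density (S (S m))).
  revert x. induction j as [|j IH]; intros x Hx.
  - rewrite iter_tail_S.
    change (iter_mu f 0) with 1. change (iter_tail f 0) with f.
    set (a0 := fun k : nat => if Nat.eqb k (S m) then 1 else 0).
    rewrite (int_pe a0 m f x).
    + rewrite Rinv_1, Rmult_1_l. apply pe_ext_loc. intros k Hk.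
      unfold cc, D, tl. rewrite Nat.sub_0_r. rewrite Nat.add_0_l, !C_n_n.
      destruct (Nat.eq_dec k (S m)) as [->|Hne].
      * rewrite sum_n_n. unfold a0. rewrite Nat.eqb_refl. Rify. field.
      * rewrite sum_n_Sm_R by lia. unfold a0 at 2. rewrite Nat.eqb_refl.
        rewrite (sum_n_m_ext_loc _ (fun _ => zero)).
        rewrite sum_n_m_const_zero. Rify. unfold zero; simpl. field.
        intros i Hi. unfold a0. destruct (Nat.eqb_spec i (S m)); [lia|reflexivity].
    + intros t Ht. unfold f, gamma_density.
      destruct (Rle_dec 0 t) as [_|Hn]; [|lra].
      replace (S (S m) - 1)%nat with (S m) by lia.
      unfold pe, P. rewrite sum_n_Sm_R by lia.
      rewrite (sum_n_m_ext_loc _ (fun _ => zero)).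
      rewrite sum_n_m_const_zero. unfold a0. rewrite Nat.eqb_refl. Rify. unfold zero; simpl. unfold Rdiv; ring.
      intros i Hi. unfold a0. destruct (Nat.eqb_spec i (S m)); [lia|]. Rify. unfold zero; simpl. unfold Rdiv; ring.
  - rewrite iter_tail_S, iter_mu_S.
    assert (HI : forall y, 0 <= y -> int_from (iter_tail f (S j)) y = pe (tl (cc (S m) j) (S m)) (S m) y).
    { intros y Hy. apply int_pe. intros t Ht. apply IH. lra. }
    rewrite !HI by lra. rewrite pe_at0, pe_scal. apply pe_ext_loc. intros k Hk.
    rewrite !tl_cc by lia. unfold cc.
    pose proof (C_pos (j + S m - 0) (S m - 0)). pose proof (C_pos (S j + S m - 0) (S m - 0)).
    unfold D. field. lra.
Qed.

Theorem theorem3 (alpha s : nat) (x : R) :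
  (2 <= alpha)%nat -> (2 <= s)%nat -> 0 <= x ->
  iter_tail (gamma_density alpha) s x =
    exp (- x)
    + exp (- x) / Binomial.C (alpha + s - 2) (alpha - 1)
      * sum_n_m (fun l => Binomial.C (s + alpha - l - 2) (alpha - l - 1)
                          * x ^ l / INR (fact l)) 1 (alpha - 1).
Proof.
  intros Ha Hs Hx.
  destruct alpha as [|[|m]]; [lia|lia|]. destruct s as [|j]; [lia|].
  rewrite main_ind by exact Hx.
  replace (S (S m) - 1)%nat with (S m) by lia.
  replace (S (S m) + S j - 2)%nat with (j + S m - 0)%nat by lia.
  unfold pe, P. rewrite sum_Sn_m_R by lia.
  assert (HD0 := C_pos (j + S m - 0) (S m - 0)).
  rewrite (sum_n_m_ext_loc _ (fun l => / Binomial.C (j + S m - 0) (S m - 0) *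
     (Binomial.C (S j + S (S m) - l - 2) (S (S m) - l - 1) * x ^ l / INR (fact l)))).
  rewrite sum_n_m_mult_l_R.
  unfold cc, D. rewrite Nat.sub_0_r. rewrite pow_O. change (fact 0) with 1%nat. Rify.
  replace (S m - 0)%nat with (S m) in * by lia. replace (j + S m - 0)%nat with (j + S m)%nat in * by lia.
  set (SS := sum_n_m _ 1 (S m)). clearbody SS. change R in SS. Rify. rewrite INR_1. field. lra.
  intros k Hk. unfold cc, D.
  replace (j + S m - k)%nat with (S j + S (S m) - k - 2)%nat by lia.
  replace (S m - k)%nat with (S (S m) - k - 1)%nat by lia.
  replace (S m - 0)%nat with (S (S m) - 0 - 1)%nat by lia.
  Rify. field. 
  split. apply INR_fact_neq_0. replace (S (S m) - 0 - 1)%nat with (S m - 0)%nat by lia. lra.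
Qed.
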